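(* For any total budget $\mathrm{TB}\in\mathbb N_0$, if $G$ and $H$ are numbers, then $G+H$ is a number.
   Context: Game forms are defined recursively: $G=\{G^{\mathcal L}\mid G^{\mathcal R}\}$ with finite sets of Left and Right options, and finite birthday. The budget set for total budget $\mathrm{TB}$ is $\mathcal B=\{0,\dots,\mathrm{TB},\hat 0,\dots,\widehat{\mathrm{TB}}\}$: state $p$ (resp. $\hat p$) means Left holds $p$ dollars and Right holds $\mathrm{TB}-p$, and Right (resp. Left) holds the tie-breaking marker. Play of $(G,\tilde p)$: at every position (terminal ones included) both players bid simultaneously, Left $\ell\in\{0,\dots,p\}$, Right $r\in\{0,\dots,\mathrm{TB}-p\}$. If Left holds the marker (state $\hat p$): if $\ell>r$ Left moves to $(G^L,\widehat{p-\ell})$, or, including the marker (allowed when $\ell\ge r$), to $(G^L,p-\ell)$; if $\ell=r$ Left wins, the marker passes to Right, play continues at $(G^L,p-\ell)$; if $\ell<r$ Right moves to $(G^R,\widehat{p+r})$. Symmetrically when Right holds the marker (state $p$): if $r>\ell$ Right moves to $(G^R,p+r)$ or, including the marker, to $(G^R,\widehat{p+r})$; if $r=\ell$ Right wins, the marker passes to Left, play continues at $(G^R,\widehat{p+r})$; if $r<\ell$ Left moves to $(G^L,p-\ell)$. A player who wins a bid but has no option loses. $o(G,\tilde p)\in\{\mathrm L,\mathrm R\}$ is the winner under optimal play; $\mathrm L>\mathrm R$. Disjunctive sum $G+H=\{G^{\mathcal L}+H,G+H^{\mathcal L}\mid G^{\mathcal R}+H,G+H^{\mathcal R}\}$. $G\ge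 H$ means $o(G+X,\tilde p)\ge o(H+X,\tilde p)$ for all game forms $X$ and all $\tilde p\in\mathcal B$; $G>H$ means $G\ge H$ and not $H\ge G$; $G<H$ means $H>G$. A game form $G$ is a number if all its options are numbers and $G^L<G<G^R$ for all $G^L\in G^{\mathcal L}$, $G^R\in G^{\mathcal R}$. *)

(* Defs.v *)
From mathcomp Require Import all_boot.
From Stdlib Require List.

Set Implicit Arguments.
Unset Strict Implicit.
Unset Printing Implicit Defensive.

(* Game forms: finite lists of Left and Right options (finite birthday is
   automatic since the type is inductive). *)
Inductive game : Type := Game : seq game -> seq game -> game.

Definition leftOpts (G : game) : seq game := let: Game GL _ := G in GL.
Definition rightOpts (G : game) : seq game := let: Game _ GR := G in GR.

(* Budget states: (p, hat).  hat = true  : state \hat p (Left holds the marker);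
                             hat = false : state p      (Right holds the marker).
   Left holds p dollars, Right holds TB - p; valid iff p <= TB. *)

(* A player winning a bid without an available option loses
   (has over [::] is false, all over [::] is true). *)
Fixpoint lwins (TB : nat) (G : game) (p : nat) (hat : bool) {struct G} : bool :=
  match G with
  | Game GL GR =>
    has (fun l =>
      all (fun r =>
        if hat then
          if r < l then
            has (fun g => lwins TB g (p - l) true || lwins TB g (p - l) false) GL
          else if l == r then
            has (fun g => lwins TB g (p - l) false) GL
          else
            all (fun g => lwins TB g (p + r) true) GR
        else
          if l < r then
            all (fun g => lwins TB g (p + r) false && lwins TB g (p + r) true) GR
          else if l == r then
            all (fun g => lwins TB g (p + r) true) GR
          else
            has (fun g => lwins TB g (p - l) false) GL)
      (iota 0 (TB - p).+1))
    (iota 0 p.+1)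
  end.

(* Outcome: true = L, false = R (so L > R corresponds to true > false). *)
Definition outcome (TB : nat) (G : game) (p : nat) (hat : bool) : bool :=
  lwins TB G p hat.

Fixpoint gadd (G H : game) {struct G} : game :=
  match G with
  | Game GL GR =>
    let fix addG (H : game) : game :=
      match H with
      | Game HL HR =>
        Game ([seq gadd g H | g <- GL] ++ [seq addG h | h <- HL])
             ([seq gadd g H | g <- GR] ++ [seq addG h | h <- HR])
      end
    in addG H
  end.

Definition gge (TB : nat) (G H : game) : Prop :=
  forall (X : game) (p : nat) (hat : bool), p <= TB ->
    outcome TB (gadd H X) p hat -> outcome TB (gadd G X) p hat.

Definition ggt (TB : nat) (G H : game) : Prop := gge TB G H /\ ~ gge TB H G.
Definition glt (TB : nat) (G H : game) : Prop := ggt TB H G.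

Inductive is_number (TB : nat) : game -> Prop :=
  | NumberI (GL GR : seq game) :
      (forall g, List.In g GL -> is_number TB g) ->
      (forall g, List.In g GR -> is_number TB g) ->
      (forall g, List.In g GL -> glt TB g (Game GL GR)) ->
      (forall g, List.In g GR -> glt TB (Game GL GR) g) ->
      is_number TB (Game GL GR).

(* Main.v *)
Require Import Defs.
From mathcomp Require Import all_boot zify.
Set Implicit Arguments. Unset Strict Implicit. Unset Printing Implicit Defensive.


Fixpoint game_ind2 (P : game -> Prop)
  (f : forall G, (forall g, List.In g (leftOpts G) -> P g) ->
                 (forall g, List.In g (rightOpts G) -> P g) -> P G) (G : game) : P G :=
  match G with
  | Game GL GR =>
    let fix IL (l : seq game) : forall g, List.In g l -> P g :=
      match l with
      | [::] => fun g (H : List.In g [::]) => match H with end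
      | x :: xs => fun g H => match H with
                              | or_introl e => eq_ind x P (game_ind2 f x) g e
                              | or_intror H' => IL xs g H'
                              end
      end in
    f (Game GL GR) (IL GL) (IL GR)
  end.

Lemma hasIn (T : Type) (P : pred T) s : has P s <-> exists x, List.In x s /\ P x.
Proof.
elim: s => [|a s IH] /=; first by split => // [[x []]].
split.
- case/orP => [Pa|/IH [x [Hx Px]]]; first by exists a; auto.
  by exists x; auto.
- move=> [x [[<-|Hx] Px]]; first by rewrite Px.
  by apply/orP; right; apply/IH; exists x.
Qed.

Lemma allIn (T : Type) (P : pred T) s : all P s <-> forall x, List.In x s -> P x.
Proof.
elim: s => [|a s IH] /=; first by split.
split.
- case/andP => Pa /IH H x [<-|Hx] //; exact: H.
- move=> H; apply/andP; split; first by apply: H; left.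
  by apply/IH => x Hx; apply: H; right.
Qed.


Fixpoint neg (G : game) : game :=
  match G with Game GL GR => Game [seq neg g | g <- GR] [seq neg g | g <- GL] end.

Lemma leftOpts_neg G : leftOpts (neg G) = map neg (rightOpts G).
Proof. by case: G. Qed.
Lemma rightOpts_neg G : rightOpts (neg G) = map neg (leftOpts G).
Proof. by case: G. Qed.

Lemma leftOpts_add A B : leftOpts (gadd A B) =
  [seq gadd a B | a <- leftOpts A] ++ [seq gadd A b | b <- leftOpts B].
Proof. by case: A; case: B. Qed.
Lemma rightOpts_add A B : rightOpts (gadd A B) =
  [seq gadd a B | a <- rightOpts A] ++ [seq gadd A b | b <- rightOpts B].
Proof. by case: A; case: B. Qed.

Lemma game_eta G : G = Game (leftOpts G) (rightOpts G).
Proof. by case: G. Qed.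

Lemma map_ext_In (A B : Type) (f g : A -> B) (l : seq A) :
  (forall x, List.In x l -> f x = g x) -> map f l = map g l.
Proof.
elim: l => [|a l IH] //= H; rewrite H; last by left.
by rewrite IH // => x Hx; apply: H; right.
Qed.

Lemma gadd_assoc A B C : gadd (gadd A B) C = gadd A (gadd B C).
Proof.
elim/game_ind2: A B C => A IHAL IHAR B.
elim/game_ind2: B => B IHBL IHBR C.
elim/game_ind2: C => C IHCL IHCR.
rewrite [gadd (gadd A B) C]game_eta [gadd A (gadd B C)]game_eta.
rewrite !leftOpts_add !rightOpts_add !map_cat -!map_comp -!catA.
congr (Game (_ ++ _ ++ _) (_ ++ _ ++ _)); apply: map_ext_In => x Hx /=.
- exact: IHAL.
- exact: IHBL.
- exact: IHCL.
- exact: IHAR.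
- exact: IHBR.
- exact: IHCR.
Qed.


Definition stepb TB (GL GR : seq game) (p : nat) (hat : bool) (l r : nat) : bool :=
        if hat then
          if r < l then
            has (fun g => lwins TB g (p - l) true || lwins TB g (p - l) false) GL
          else if l == r then
            has (fun g => lwins TB g (p - l) false) GL
          else
            all (fun g => lwins TB g (p + r) true) GR
        else
          if l < r then
            all (fun g => lwins TB g (p + r) false && lwins TB g (p + r) true) GR
          else if l == r then
            all (fun g => lwins TB g (p + r) true) GR
          else
            has (fun g => lwins TB g (p - l) false) GL.

Lemma lwE TB G p hat : lwins TB G p hat =
  has (fun l => all (fun r => stepb TB (leftOpts G) (rightOpts G) p hat l r)
     (iota 0 (TB - p).+1)) (iota 0 p.+1).
Proof. by case: G. Qed.

Lemma lwP TB G p hat : lwins TB G p hat <->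
  exists l, l <= p /\ forall r, r <= TB - p -> stepb TB (leftOpts G) (rightOpts G) p hat l r.
Proof.
rewrite lwE; split.
- case/hasP => l; rewrite mem_iota => Hl /allP H; exists l; split; first by lia.
  by move=> r Hr; apply: H; rewrite mem_iota; lia.
- move=> [l [Hl H]]; apply/hasP; exists l; first by rewrite mem_iota; lia.
  by apply/allP => r; rewrite mem_iota => Hr; apply: H; lia.
Qed.



Lemma nlwP TB G p hat : ~~ lwins TB G p hat <->
  forall l, l <= p -> exists r, r <= TB - p /\ ~~ stepb TB (leftOpts G) (rightOpts G) p hat l r.
Proof.
rewrite lwE -all_predC; split.
- move/allP => H l Hl.
  have HH : ~~ all (fun r => stepb TB (leftOpts G) (rightOpts G) p hat l r) (iota 0 (TB - p).+1).
    by have := H l; rewrite mem_iota; apply; lia.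
  move: HH; rewrite -has_predC => /hasP [r]; rewrite mem_iota => Hr Hs; exists r; split => //; lia.
- move=> H; apply/allP => l; rewrite mem_iota => Hl.
  have [r [Hr Hs]] := H l ltac:(lia).
  apply/negP => /allP A; move: Hs; rewrite A //; rewrite mem_iota; lia.
Qed.

Lemma sT_lt TB GL GR p l r : r < l -> stepb TB GL GR p true l r =
  has (fun g => lwins TB g (p - l) true || lwins TB g (p - l) false) GL.
Proof. by rewrite /stepb => ->. Qed.
Lemma sT_eq TB GL GR p l : stepb TB GL GR p true l l =
  has (fun g => lwins TB g (p - l) false) GL.
Proof. by rewrite /stepb ltnn eqxx. Qed.
Lemma sT_gt TB GL GR p l r : l < r -> stepb TB GL GR p true l r =
  all (fun g => lwins TB g (p + r) true) GR.
Proof. move=> H; rewrite /stepb ltnNge (ltnW H) /=; case: eqP => //; lia. Qed.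
Lemma sF_lt TB GL GR p l r : l < r -> stepb TB GL GR p false l r =
  all (fun g => lwins TB g (p + r) false && lwins TB g (p + r) true) GR.
Proof. by rewrite /stepb => ->. Qed.
Lemma sF_eq TB GL GR p l : stepb TB GL GR p false l l =
  all (fun g => lwins TB g (p + l) true) GR.
Proof. by rewrite /stepb ltnn eqxx. Qed.
Lemma sF_gt TB GL GR p l r : r < l -> stepb TB GL GR p false l r =
  has (fun g => lwins TB g (p - l) false) GL.
Proof. move=> H; rewrite /stepb ltnNge (ltnW H) /=; case: eqP => //; lia. Qed.

Lemma has_sub_In (T : Type) (P Q : pred T) s :
  (forall x, List.In x s -> P x -> Q x) -> has P s -> has Q s.
Proof. move=> H /hasIn [x [Hx Px]]; apply/hasIn; exists x; split => //; exact: H. Qed.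
Lemma all_sub_In (T : Type) (P Q : pred T) s :
  (forall x, List.In x s -> P x -> Q x) -> all P s -> all Q s.
Proof. move=> H /allIn A; apply/allIn => x Hx; apply: H => //; exact: A. Qed.

Lemma lw_mono TB G p p' hat : p <= p' -> p' <= TB -> lwins TB G p hat -> lwins TB G p' hat.
Proof.
elim/game_ind2: G p p' hat => G IHL IHR p p' hat Hp Hp' /lwP [l [Hl H]].
apply/lwP; exists l; split; first by lia.
move=> r Hr; have := H r ltac:(lia); clear H.
case: hat.
- case: (ltngtP r l) => Hrl.
  + rewrite !sT_lt //; apply: has_sub_In => g Hg /orP [] Hw; apply/orP; [left|right];
    apply: (IHL _ Hg (p - l)) => //; lia.
  + rewrite !sT_gt //; apply: all_sub_In => g Hg Hw; apply: (IHR _ Hg (p + r)) => //; lia.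
  + subst r; rewrite !sT_eq; apply: has_sub_In => g Hg Hw; apply: (IHL _ Hg (p - l)) => //; lia.
- case: (ltngtP r l) => Hrl.
  + rewrite !sF_gt //; apply: has_sub_In => g Hg Hw; apply: (IHL _ Hg (p - l)) => //; lia.
  + rewrite !sF_lt //; apply: all_sub_In => g Hg /andP [H1 H2]; apply/andP; split;
    apply: (IHR _ Hg (p + r)) => //; lia.
  + subst r; rewrite !sF_eq; apply: all_sub_In => g Hg Hw; apply: (IHR _ Hg (p + l)) => //; lia.
Qed.

Lemma nlw_mono TB G p p' hat : p' <= p -> p <= TB -> ~~ lwins TB G p hat -> ~~ lwins TB G p' hat.
Proof. move=> H1 H2; apply: contra; exact: lw_mono. Qed.


Inductive eqv : game -> game -> Prop :=
| EqvI G H :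
   (forall g, List.In g (leftOpts G) -> exists h, List.In h (leftOpts H) /\ eqv g h) ->
   (forall h, List.In h (leftOpts H) -> exists g, List.In g (leftOpts G) /\ eqv g h) ->
   (forall g, List.In g (rightOpts G) -> exists h, List.In h (rightOpts H) /\ eqv g h) ->
   (forall h, List.In h (rightOpts H) -> exists g, List.In g (rightOpts G) /\ eqv g h) ->
   eqv G H.

Lemma has_rel (T : Type) (R : T -> T -> Prop) (P : pred T) s1 s2 :
  (forall x, List.In x s1 -> exists y, List.In y s2 /\ R x y) ->
  (forall y, List.In y s2 -> exists x, List.In x s1 /\ R x y) ->
  (forall x y, List.In x s1 -> R x y -> P x = P y) -> has P s1 = has P s2.
Proof.
move=> H1 H2 H3; apply/idP/idP.
- case/hasIn => x [Hx Px]; have [y [Hy Rxy]] := H1 x Hx.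
  by apply/hasIn; exists y; split => //; rewrite -(H3 x y).
- case/hasIn => y [Hy Py]; have [x [Hx Rxy]] := H2 y Hy.
  by apply/hasIn; exists x; split => //; rewrite (H3 x y).
Qed.

Lemma all_rel (T : Type) (R : T -> T -> Prop) (P : pred T) s1 s2 :
  (forall x, List.In x s1 -> exists y, List.In y s2 /\ R x y) ->
  (forall y, List.In y s2 -> exists x, List.In x s1 /\ R x y) ->
  (forall x y, List.In x s1 -> R x y -> P x = P y) -> all P s1 = all P s2.
Proof.
move=> H1 H2 H3; apply/idP/idP.
- move/allIn => A; apply/allIn => y Hy; have [x [Hx Rxy]] := H2 y Hy.
  by rewrite -(H3 x y) //; apply: A.
- move/allIn => A; apply/allIn => x Hx; have [y [Hy Rxy]] := H1 x Hx.
  by rewrite (H3 x y) //; apply: A.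
Qed.

Lemma eqv_inv G H : eqv G H ->
   (forall g, List.In g (leftOpts G) -> exists h, List.In h (leftOpts H) /\ eqv g h) /\
   (forall h, List.In h (leftOpts H) -> exists g, List.In g (leftOpts G) /\ eqv g h) /\
   (forall g, List.In g (rightOpts G) -> exists h, List.In h (rightOpts H) /\ eqv g h) /\
   (forall h, List.In h (rightOpts H) -> exists g, List.In g (rightOpts G) /\ eqv g h).
Proof. by case. Qed.

Lemma lw_eqv TB G H : eqv G H -> forall p hat, lwins TB G p hat = lwins TB H p hat.
Proof.
elim/game_ind2: G H => G IHL IHR H /eqv_inv [h1 [h2 [h3 h4]]] p hat.
rewrite !lwE; apply: eq_has => l; apply: eq_all => r; rewrite /stepb.
case: hat; case: ifP => _; try case: ifP => _.
all: first [ apply: (has_rel h1 h2) => x y Hx Hxy; by rewrite !(IHL x Hx y Hxy)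
           | apply: (all_rel h3 h4) => x y Hx Hxy; by rewrite !(IHR x Hx y Hxy) ].
Qed.

Lemma In_map_inv (A B : Type) (f : A -> B) l y :
  List.In y (map f l) -> exists x, List.In x l /\ y = f x.
Proof.
elim: l => [|a l IH] //= [H|/IH [x [Hx H]]]; [by exists a; split; [left|] | by exists x; split; [right|]].
Qed.

Lemma In_cat_inv (A : Type) (l1 l2 : seq A) y :
  List.In y (l1 ++ l2) -> List.In y l1 \/ List.In y l2.
Proof. elim: l1 => [|a l IH] /=; [by right | move=> [->|/IH []]; tauto]. Qed.

Lemma In_catl (A : Type) (l1 l2 : seq A) y : List.In y l1 -> List.In y (l1 ++ l2).
Proof. elim: l1 => [|a l IH] //= [->|H]; [by left | by right; apply: IH]. Qed.
Lemma In_catr (A : Type) (l1 l2 : seq A) y : List.In y l2 -> List.In y (l1 ++ l2).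
Proof. elim: l1 => [|a l IH] //= H; by right; apply: IH. Qed.
Lemma In_map (A B : Type) (f : A -> B) l x : List.In x l -> List.In (f x) (map f l).
Proof. elim: l => [|a l IH] //= [->|H]; [by left | by right; apply: IH]. Qed.

Lemma eqv_comm A B : eqv (gadd A B) (gadd B A).
Proof.
elim/game_ind2: A B => A IHAL IHAR B.
elim/game_ind2: B => B IHBL IHBR.
constructor => g; rewrite ?leftOpts_add ?rightOpts_add => Hg0; have [Hg1|Hg1] := In_cat_inv Hg0; have [x [Hx Hg]] := In_map_inv Hg1; subst g.
all: first [ by exists (gadd B x); split; [apply: In_catr; apply: In_map | apply: IHAL]
           | by exists (gadd x A); split; [apply: In_catl; apply: In_map | apply: IHBL]
           | by exists (gadd B x); split; [apply: In_catr; apply: In_map | apply: IHAR]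
           | by exists (gadd x A); split; [apply: In_catl; apply: In_map | apply: IHBR]
           | by exists (gadd A x); split; [apply: In_catr; apply: In_map | apply: IHBL]
           | by exists (gadd x B); split; [apply: In_catl; apply: In_map | apply: IHAL]
           | by exists (gadd A x); split; [apply: In_catr; apply: In_map | apply: IHBR]
           | by exists (gadd x B); split; [apply: In_catl; apply: In_map | apply: IHAR] ].
Qed.

Lemma eqv_refl A : eqv A A.
Proof.
elim/game_ind2: A => A IHL IHR; constructor => g Hg; exists g; split => //;
  by [apply: IHL | apply: IHR].
Qed.

Lemma eqv_add A A' B B' : eqv A A' -> eqv B B' -> eqv (gadd A B) (gadd A' B').
Proof.
move=> HA; elim/game_ind2: A A' HA B B' => A IHAL IHAR A' HA B.
elim/game_ind2: B => B IHBL IHBR B' HB.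
have [a1 [a2 [a3 a4]]] := eqv_inv HA.
have [b1 [b2 [b3 b4]]] := eqv_inv HB.
constructor => g; rewrite ?leftOpts_add ?rightOpts_add => Hg0;
  have [Hg1|Hg1] := In_cat_inv Hg0; have [x [Hx Hg]] := In_map_inv Hg1; subst g.
- have [y [Hy Hxy]] := a1 x Hx; exists (gadd y B'); split; [apply: In_catl; exact: In_map | exact: IHAL].
- have [y [Hy Hxy]] := b1 x Hx; exists (gadd A' y); split; [apply: In_catr; exact: In_map | exact: IHBL].
- have [y [Hy Hxy]] := a2 x Hx; exists (gadd y B); split; [apply: In_catl; exact: In_map | exact: IHAL].
- have [y [Hy Hxy]] := b2 x Hx; exists (gadd A y); split; [apply: In_catr; exact: In_map | exact: IHBL].
- have [y [Hy Hxy]] := a3 x Hx; exists (gadd y B'); split; [apply: In_catl; exact: In_map | exact: IHAR].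
- have [y [Hy Hxy]] := b3 x Hx; exists (gadd A' y); split; [apply: In_catr; exact: In_map | exact: IHBR].
- have [y [Hy Hxy]] := a4 x Hx; exists (gadd y B); split; [apply: In_catl; exact: In_map | exact: IHAR].
- have [y [Hy Hxy]] := b4 x Hx; exists (gadd A y); split; [apply: In_catr; exact: In_map | exact: IHBR].
Qed.


Definition S3 A B X := gadd (gadd A (neg B)) X.

Lemma optL A B X g : List.In g (leftOpts (S3 A B X)) ->
  (exists a, List.In a (leftOpts A) /\ g = S3 a B X) \/
  (exists b, List.In b (rightOpts B) /\ g = S3 A b X) \/
  (exists x, List.In x (leftOpts X) /\ g = S3 A B x).
Proof.
rewrite /S3 !leftOpts_add leftOpts_neg => H.
have [H1|H1] := In_cat_inv H; have [y [Hy ->]] := In_map_inv H1.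
- have [H2|H2] := In_cat_inv Hy; have [z [Hz ->]] := In_map_inv H2.
  + by left; exists z.
  + have [w [Hw ->]] := In_map_inv Hz; by right; left; exists w.
- by right; right; exists y.
Qed.

Lemma optR A B X g : List.In g (rightOpts (S3 A B X)) ->
  (exists a, List.In a (rightOpts A) /\ g = S3 a B X) \/
  (exists b, List.In b (leftOpts B) /\ g = S3 A b X) \/
  (exists x, List.In x (rightOpts X) /\ g = S3 A B x).
Proof.
rewrite /S3 !rightOpts_add rightOpts_neg => H.
have [H1|H1] := In_cat_inv H; have [y [Hy ->]] := In_map_inv H1.
- have [H2|H2] := In_cat_inv Hy; have [z [Hz ->]] := In_map_inv H2.
  + by left; exists z.
  + have [w [Hw ->]] := In_map_inv Hz; by right; left; exists w.
- by right; right; exists y.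
Qed.

Lemma inL1 A B X a : List.In a (leftOpts A) -> List.In (S3 a B X) (leftOpts (S3 A B X)).
Proof. by move=> H; rewrite /S3 !leftOpts_add; apply: In_catl; apply: In_map; apply: In_catl; apply: In_map. Qed.
Lemma inL2 A B X b : List.In b (rightOpts B) -> List.In (S3 A b X) (leftOpts (S3 A B X)).
Proof. by move=> H; rewrite /S3 !leftOpts_add leftOpts_neg; apply: In_catl; apply: In_map; apply: In_catr; apply: In_map; apply: In_map. Qed.
Lemma inL3 A B X x : List.In x (leftOpts X) -> List.In (S3 A B x) (leftOpts (S3 A B X)).
Proof. by move=> H; rewrite /S3 [leftOpts (gadd _ X)]leftOpts_add; apply: In_catr; apply: In_map. Qed.
Lemma inR1 A B X a : List.In a (rightOpts A) -> List.In (S3 a B X) (rightOpts (S3 A B X)).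
Proof. by move=> H; rewrite /S3 !rightOpts_add; apply: In_catl; apply: In_map; apply: In_catl; apply: In_map. Qed.
Lemma inR2 A B X b : List.In b (leftOpts B) -> List.In (S3 A b X) (rightOpts (S3 A B X)).
Proof. by move=> H; rewrite /S3 !rightOpts_add rightOpts_neg; apply: In_catl; apply: In_map; apply: In_catr; apply: In_map; apply: In_map. Qed.
Lemma inR3 A B X x : List.In x (rightOpts X) -> List.In (S3 A B x) (rightOpts (S3 A B X)).
Proof. by move=> H; rewrite /S3 [rightOpts (gadd _ X)]rightOpts_add; apply: In_catr; apply: In_map. Qed.

Lemma gge_S3 TB G H B X p hat : gge TB G H -> p <= TB ->
  lwins TB (S3 H B X) p hat -> lwins TB (S3 G B X) p hat.
Proof. by rewrite /S3 !gadd_assoc => HG Hp; apply: HG. Qed.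
Lemma gge_S3N TB G H B X p hat : gge TB G H -> p <= TB ->
  ~~ lwins TB (S3 G B X) p hat -> ~~ lwins TB (S3 H B X) p hat.
Proof. by move=> HG Hp; apply: contra; apply: gge_S3. Qed.

Lemma hasW (T : Type) (P : pred T) s x : List.In x s -> P x -> has P s.
Proof. by move=> Hx Px; apply/hasIn; exists x. Qed.
Lemma nhasW (T : Type) (P : pred T) s : (forall x, List.In x s -> ~~ P x) -> ~~ has P s.
Proof. by move=> H; apply/negP => /hasIn [x [Hx Px]]; move: (H x Hx); rewrite Px. Qed.
Lemma nallW (T : Type) (P : pred T) s x : List.In x s -> ~~ P x -> ~~ all P s.
Proof. by move=> Hx Px; apply/negP => /allIn A; move: Px; rewrite A. Qed.
Lemma hasE (T : Type) (P : pred T) s : has P s -> exists x, List.In x s /\ P x.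
Proof. by move/hasIn. Qed.
Lemma allE (T : Type) (P : pred T) s : all P s -> forall x, List.In x s -> P x.
Proof. by move/allIn. Qed.
Lemma nhasE (T : Type) (P : pred T) s : ~~ has P s -> forall x, List.In x s -> ~~ P x.
Proof. by move=> H x Hx; apply/negP => Px; move: H; rewrite (hasW Hx Px). Qed.
Lemma nallE (T : Type) (P : pred T) s : ~~ all P s -> exists x, List.In x s /\ ~~ P x.
Proof.
move=> H; rewrite -has_predC in H; have [x [Hx Px]] := hasE H; by exists x.
Qed.


Definition D1x TB H X := forall p hat, p <= TB -> lwins TB X p hat -> lwins TB (S3 H H X) p hat.
Definition ND2x TB H X := forall p hat, p <= TB -> ~~ lwins TB X p hat -> ~~ lwins TB (S3 H H X) p hat.
Definition TpP TB H h := forall X q, q <= TB -> lwins TB X q false ->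
  (forall x, List.In x (rightOpts X) -> lwins TB x q true) -> lwins TB (S3 H h X) q true.
Definition TmX TB H k X := forall q, q <= TB -> lwins TB X q false ->
  (forall x, List.In x (rightOpts X) -> lwins TB x q true) -> lwins TB (S3 k H X) q true.
Definition UpP TB H k := forall X q, q <= TB -> ~~ lwins TB X q true ->
  (forall x, List.In x (leftOpts X) -> ~~ lwins TB x q false) -> ~~ lwins TB (S3 H k X) q false.
Definition UmX TB H h X := forall q, q <= TB -> ~~ lwins TB X q true ->
  (forall x, List.In x (leftOpts X) -> ~~ lwins TB x q false) -> ~~ lwins TB (S3 h H X) q false.

Lemma Tp_proof TB H h : List.In h (leftOpts H) -> gge TB H h ->
  (forall k, List.In k (rightOpts H) -> gge TB k H) -> (forall X, D1x TB h X) ->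
  (forall h', List.In h' (leftOpts h) -> TpP TB h h') -> TpP TB H h.
Proof.
move=> Hin Hh HR D1h Th X q Hq; move Hn: (TB - q) => n.
elim/ltn_ind: n q Hq Hn => n IH q Hq Hn HX HXR.
apply/lwP; exists 0; split => // r Hr.
case: (posnP r) => [->|Hr0].
- rewrite sT_eq subn0; apply: (hasW (inL1 h X Hin)); exact: D1h.
- rewrite sT_gt //; apply/allIn => g /optR [[a [Ha ->]]|[[b [Hb ->]]|[x [Hx ->]]]].
  + apply: (gge_S3 (HR a Ha)); first by lia.
    apply: (IH (TB - (q + r))); try lia.
    * apply: (lw_mono (p := q)) => //; lia.
    * move=> x Hx; apply: (lw_mono (p := q)); [lia|lia|exact: HXR].
  + apply: (gge_S3 Hh); first by lia.
    apply: (Th b Hb); first by lia.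
    * apply: (lw_mono (p := q)) => //; lia.
    * move=> x Hx; apply: (lw_mono (p := q)); [lia|lia|exact: HXR].
  + apply: (gge_S3 Hh); first by lia.
    apply: D1h; first by lia.
    apply: (lw_mono (p := q)); [lia|lia|exact: HXR].
Qed.

Lemma Tm_proof TB H k X : List.In k (rightOpts H) -> gge TB k H ->
  (forall k', List.In k' (rightOpts k) -> gge TB k' k) -> (forall Y, D1x TB k Y) ->
  (forall h, List.In h (leftOpts H) -> TpP TB H h) ->
  (forall x, List.In x (rightOpts X) -> D1x TB H x) -> TmX TB H k X.
Proof.
move=> Hin Hk HR D1k Tp D1X q Hq; move Hn: (TB - q) => n.
elim/ltn_ind: n q Hq Hn => n IH q Hq Hn HX HXR.
apply/lwP; exists 0; split => // r Hr.
case: (posnP r) => [->|Hr0].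
- rewrite sT_eq subn0; apply: (hasW (inL2 k X Hin)); exact: D1k.
- rewrite sT_gt //; apply/allIn => g /optR [[a [Ha ->]]|[[b [Hb ->]]|[x [Hx ->]]]].
  + apply: (gge_S3 (HR a Ha)); first by lia.
    apply: (IH (TB - (q + r))); try lia.
    * apply: (lw_mono (p := q)) => //; lia.
    * move=> x Hx; apply: (lw_mono (p := q)); [lia|lia|exact: HXR].
  + apply: (gge_S3 Hk); first by lia.
    apply: (Tp b Hb); first by lia.
    * apply: (lw_mono (p := q)) => //; lia.
    * move=> x Hx; apply: (lw_mono (p := q)); [lia|lia|exact: HXR].
  + apply: (gge_S3 Hk); first by lia.
    apply: (D1X x Hx); first by lia.
    apply: (lw_mono (p := q)); [lia|lia|exact: HXR].
Qed.

Lemma D1_step TB H X :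
  (forall h, List.In h (leftOpts H) -> gge TB H h) ->
  (forall k, List.In k (rightOpts H) -> gge TB k H) ->
  (forall h, List.In h (leftOpts H) -> forall Y, D1x TB h Y) ->
  (forall h, List.In h (leftOpts H) -> TpP TB H h) ->
  (forall k, List.In k (rightOpts H) -> TmX TB H k X) ->
  (forall x, List.In x (leftOpts X) -> D1x TB H x) ->
  (forall x, List.In x (rightOpts X) -> D1x TB H x) ->
  D1x TB H X.
Proof.
move=> hL hR D1h Tp Tm D1L D1R p hat Hp; move Hn: (TB - p) => n.
elim/ltn_ind: n p hat Hp Hn => n IH p hat Hp Hn HX.
have /lwP [l [Hl HS]] := HX.
apply/lwP; exists l; split => // r Hr; have := HS r Hr; clear HS.
case: hat HX IH => HX IH; case: (ltngtP r l) => Hrl.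
- rewrite !sT_lt // => /hasE [x [Hx Hxw]]; apply: (hasW (inL3 H H Hx)).
  by case/orP: Hxw => Hw; apply/orP; [left|right]; apply: D1L => //; lia.
- rewrite !sT_gt // => /allE A; apply/allIn => g /optR [[a [Ha ->]]|[[b [Hb ->]]|[x [Hx ->]]]].
  + apply: (gge_S3 (hR a Ha)); first by lia.
    apply: (IH (TB - (p + r))); try lia.
    apply: (lw_mono (p := p)) => //; lia.
  + apply: (gge_S3 (hL b Hb)); first by lia.
    apply: (D1h b Hb); first by lia.
    apply: (lw_mono (p := p)) => //; lia.
  + apply: D1R => //; [lia | exact: A].
- subst r; rewrite !sT_eq => /hasE [x [Hx Hxw]]; apply: (hasW (inL3 H H Hx)).
  by apply: D1L => //; lia.
- rewrite !sF_gt // => /hasE [x [Hx Hxw]]; apply: (hasW (inL3 H H Hx)).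
  by apply: D1L => //; lia.
- rewrite !sF_lt // => /allE A; apply/allIn => g /optR [[a [Ha ->]]|[[b [Hb ->]]|[x [Hx ->]]]].
  + apply/andP; split.
    * apply: (gge_S3 (hR a Ha)); first by lia.
      apply: (IH (TB - (p + r))); try lia.
      apply: (lw_mono (p := p)) => //; lia.
    * apply: (Tm a Ha); first by lia.
      -- apply: (lw_mono (p := p)) => //; lia.
      -- by move=> x Hx; have /andP [] := A x Hx.
  + apply/andP; split.
    * apply: (gge_S3 (hL b Hb)); first by lia.
      apply: (D1h b Hb); first by lia.
      apply: (lw_mono (p := p)) => //; lia.
    * apply: (Tp b Hb); first by lia.
      -- apply: (lw_mono (p := p)) => //; lia.
      -- by move=> x Hx; have /andP [] := A x Hx.
  + have /andP [A1 A2] := A x Hx.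
    by apply/andP; split; apply: D1R => //; lia.
- subst r; rewrite !sF_eq => /allE A; apply/allIn => g /optR [[a [Ha ->]]|[[b [Hb ->]]|[x [Hx ->]]]].
  + apply: (Tm a Ha); first by lia.
    * apply: (lw_mono (p := p)) => //; lia.
    * exact: A.
  + apply: (Tp b Hb); first by lia.
    * apply: (lw_mono (p := p)) => //; lia.
    * exact: A.
  + by apply: D1R => //; [lia | exact: A].
Qed.

Lemma D1_all TB H :
  (forall h, List.In h (leftOpts H) -> gge TB H h) ->
  (forall k, List.In k (rightOpts H) -> gge TB k H) ->
  (forall h, List.In h (leftOpts H) -> forall Y, D1x TB h Y) ->
  (forall k, List.In k (rightOpts H) -> forall Y, D1x TB k Y) ->
  (forall k, List.In k (rightOpts H) -> forall k', List.In k' (rightOpts k) -> gge TB k' k) ->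
  (forall h, List.In h (leftOpts H) -> TpP TB H h) ->
  forall X, D1x TB H X.
Proof.
move=> hL hR D1h D1k hRR Tp X.
elim/game_ind2: X => X IHL IHR.
apply: D1_step => // k Hk.
apply: Tm_proof => //; [exact: hR | exact: hRR | exact: D1k].
Qed.

Lemma Up_proof TB H k : List.In k (rightOpts H) -> gge TB k H ->
  (forall h, List.In h (leftOpts H) -> gge TB H h) -> (forall Y, ND2x TB k Y) ->
  (forall k', List.In k' (rightOpts k) -> UpP TB k k') -> UpP TB H k.
Proof.
move=> Hin Hk hL ND2k Uk X q Hq.
elim/ltn_ind: q Hq => q IH Hq HX HXL.
apply/nlwP => l Hl; exists 0; split; first by lia.
case: (posnP l) => [->|Hl0].
- rewrite sF_eq addn0; apply: (nallW (inR1 k X Hin)); exact: ND2k.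
- rewrite sF_gt //; apply: nhasW => g /optL [[a [Ha ->]]|[[b [Hb ->]]|[x [Hx ->]]]].
  + apply: (gge_S3N (hL a Ha)); first by lia.
    apply: IH; try lia.
    * apply: (nlw_mono (p := q)) => //; lia.
    * move=> x Hx; apply: (nlw_mono (p := q)); [lia|lia|exact: HXL].
  + apply: (gge_S3N Hk); first by lia.
    apply: (Uk b Hb); first by lia.
    * apply: (nlw_mono (p := q)) => //; lia.
    * move=> x Hx; apply: (nlw_mono (p := q)); [lia|lia|exact: HXL].
  + apply: (gge_S3N Hk); first by lia.
    apply: ND2k; first by lia.
    apply: (nlw_mono (p := q)); [lia|lia|exact: HXL].
Qed.

Lemma Um_proof TB H h X : List.In h (leftOpts H) -> gge TB H h ->
  (forall h', List.In h' (leftOpts h) -> gge TB h h') -> (forall Y, ND2x TB h Y) ->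
  (forall k, List.In k (rightOpts H) -> UpP TB H k) ->
  (forall x, List.In x (leftOpts X) -> ND2x TB H x) -> UmX TB H h X.
Proof.
move=> Hin Hh hLL ND2h Up ND2X q Hq.
elim/ltn_ind: q Hq => q IH Hq HX HXL.
apply/nlwP => l Hl; exists 0; split; first by lia.
case: (posnP l) => [->|Hl0].
- rewrite sF_eq addn0; apply: (nallW (inR2 h X Hin)); exact: ND2h.
- rewrite sF_gt //; apply: nhasW => g /optL [[a [Ha ->]]|[[b [Hb ->]]|[x [Hx ->]]]].
  + apply: (gge_S3N (hLL a Ha)); first by lia.
    apply: IH; try lia.
    * apply: (nlw_mono (p := q)) => //; lia.
    * move=> x Hx; apply: (nlw_mono (p := q)); [lia|lia|exact: HXL].
  + apply: (gge_S3N Hh); first by lia.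
    apply: (Up b Hb); first by lia.
    * apply: (nlw_mono (p := q)) => //; lia.
    * move=> x Hx; apply: (nlw_mono (p := q)); [lia|lia|exact: HXL].
  + apply: (gge_S3N Hh); first by lia.
    apply: (ND2X x Hx); first by lia.
    apply: (nlw_mono (p := q)); [lia|lia|exact: HXL].
Qed.

Lemma ND2_step TB H X :
  (forall h, List.In h (leftOpts H) -> gge TB H h) ->
  (forall k, List.In k (rightOpts H) -> gge TB k H) ->
  (forall k, List.In k (rightOpts H) -> forall Y, ND2x TB k Y) ->
  (forall h, List.In h (leftOpts H) -> UmX TB H h X) ->
  (forall k, List.In k (rightOpts H) -> UpP TB H k) ->
  (forall x, List.In x (leftOpts X) -> ND2x TB H x) ->
  (forall x, List.In x (rightOpts X) -> ND2x TB H x) ->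
  ND2x TB H X.
Proof.
move=> hL hR ND2k Um Up NL NR p hat Hp.
elim/ltn_ind: p hat Hp => p IH hat Hp HX.
have HS := (nlwP _ _ _ _).1 HX.
apply/nlwP => l Hl; have [r [Hr Hs]] := HS l Hl; exists r; split => //; clear HS.
move: Hs; case: hat HX IH => HX IH; case: (ltngtP r l) => Hrl.
- rewrite !sT_lt // => /nhasE A; apply: nhasW => g /optL [[a [Ha ->]]|[[b [Hb ->]]|[x [Hx ->]]]];
  rewrite negb_or; apply/andP; split.
  + apply: (gge_S3N (hL a Ha)); first by lia.
    apply: IH; try lia; apply: (nlw_mono (p := p)) => //; lia.
  + apply: (Um a Ha); first by lia.
    * apply: (nlw_mono (p := p)) => //; lia.
    * by move=> x Hx; have := A x Hx; rewrite negb_or => /andP [].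
  + apply: (gge_S3N (hR b Hb)); first by lia.
    apply: (ND2k b Hb); first by lia.
    apply: (nlw_mono (p := p)) => //; lia.
  + apply: (Up b Hb); first by lia.
    * apply: (nlw_mono (p := p)) => //; lia.
    * by move=> x Hx; have := A x Hx; rewrite negb_or => /andP [].
  + apply: NL => //; first by lia.
    by have := A x Hx; rewrite negb_or => /andP [].
  + apply: NL => //; first by lia.
    by have := A x Hx; rewrite negb_or => /andP [].
- rewrite !sT_gt // => /nallE [x [Hx Hw]]; apply: (nallW (inR3 H H Hx)).
  by apply: NR => //; lia.
- subst r; rewrite !sT_eq => /nhasE A; apply: nhasW => g /optL [[a [Ha ->]]|[[b [Hb ->]]|[x [Hx ->]]]].
  + apply: (Um a Ha); first by lia.
    * apply: (nlw_mono (p := p)) => //; lia.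
    * exact: A.
  + apply: (Up b Hb); first by lia.
    * apply: (nlw_mono (p := p)) => //; lia.
    * exact: A.
  + by apply: NL => //; [lia | exact: A].
- rewrite !sF_gt // => /nhasE A; apply: nhasW => g /optL [[a [Ha ->]]|[[b [Hb ->]]|[x [Hx ->]]]].
  + apply: (gge_S3N (hL a Ha)); first by lia.
    apply: IH; try lia; apply: (nlw_mono (p := p)) => //; lia.
  + apply: (gge_S3N (hR b Hb)); first by lia.
    apply: (ND2k b Hb); first by lia.
    apply: (nlw_mono (p := p)) => //; lia.
  + by apply: NL => //; [lia | exact: A].
- rewrite !sF_lt // => /nallE [x [Hx Hw]]; apply: (nallW (inR3 H H Hx)).
  move: Hw; rewrite !negb_and => /orP [] Hw; apply/orP; [left|right]; by apply: NR => //; lia.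
- subst r; rewrite !sF_eq => /nallE [x [Hx Hw]]; apply: (nallW (inR3 H H Hx)).
  by apply: NR => //; lia.
Qed.

Lemma ND2_all TB H :
  (forall h, List.In h (leftOpts H) -> gge TB H h) ->
  (forall k, List.In k (rightOpts H) -> gge TB k H) ->
  (forall h, List.In h (leftOpts H) -> forall Y, ND2x TB h Y) ->
  (forall k, List.In k (rightOpts H) -> forall Y, ND2x TB k Y) ->
  (forall h, List.In h (leftOpts H) -> forall h', List.In h' (leftOpts h) -> gge TB h h') ->
  (forall k, List.In k (rightOpts H) -> UpP TB H k) ->
  forall X, ND2x TB H X.
Proof.
move=> hL hR ND2h ND2k hLL Up X.
elim/game_ind2: X => X IHL IHR.
apply: ND2_step => // h Hh.
apply: Um_proof => //; [exact: hL | exact: hLL | exact: ND2h].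
Qed.


Lemma num_inv TB G : is_number TB G ->
  (forall g, List.In g (leftOpts G) -> is_number TB g /\ gge TB G g /\ ~ gge TB g G) /\
  (forall g, List.In g (rightOpts G) -> is_number TB g /\ gge TB g G /\ ~ gge TB G g).
Proof.
case=> GL GR nL nR lL lR; split => g Hg /=.
- by have [h1 h2] := lL g Hg; split; [exact: nL | split].
- by have [h1 h2] := lR g Hg; split; [exact: nR | split].
Qed.

Definition Claim TB H :=
  (forall X, D1x TB H X) /\ (forall X, ND2x TB H X) /\
  (forall h, List.In h (leftOpts H) -> TpP TB H h) /\
  (forall k, List.In k (rightOpts H) -> UpP TB H k).

Lemma claim_num TB H : is_number TB H -> Claim TB H.
Proof.
elim=> GL GR nL IHL nR IHR lL lR /=.
set H0 := Game GL GR.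
have hL : forall h, List.In h (leftOpts H0) -> gge TB H0 h by move=> h Hh; have [] := lL h Hh.
have hR : forall k, List.In k (rightOpts H0) -> gge TB k H0 by move=> k Hk; have [] := lR k Hk.
have hLL : forall h, List.In h (leftOpts H0) -> forall h', List.In h' (leftOpts h) -> gge TB h h'.
  by move=> h Hh h' Hh'; have [+ _] := num_inv (nL h Hh); move/(_ h' Hh') => [_ []].
have hRR : forall k, List.In k (rightOpts H0) -> forall k', List.In k' (rightOpts k) -> gge TB k' k.
  by move=> k Hk k' Hk'; have [_ +] := num_inv (nR k Hk); move/(_ k' Hk') => [_ []].
have Tp : forall h, List.In h (leftOpts H0) -> TpP TB H0 h.
  move=> h Hh; apply: Tp_proof => //; [exact: hL | exact: (IHL h Hh).1 | exact: (IHL h Hh).2.2.1].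
have Up : forall k, List.In k (rightOpts H0) -> UpP TB H0 k.
  move=> k Hk; apply: Up_proof => //; [exact: hR | exact: (IHR k Hk).2.1 | exact: (IHR k Hk).2.2.2].
split; [|split; [|split]] => //.
- apply: D1_all => //.
  + by move=> h Hh; exact: (IHL h Hh).1.
  + by move=> k Hk; exact: (IHR k Hk).1.
- apply: ND2_all => //.
  + by move=> h Hh; exact: (IHL h Hh).2.1.
  + by move=> k Hk; exact: (IHR k Hk).2.1.
Qed.

Lemma inv1 TB H X p hat : is_number TB H -> p <= TB ->
  lwins TB X p hat -> lwins TB (S3 H H X) p hat.
Proof. by move=> /claim_num [D _] Hp; apply: D. Qed.
Lemma inv2 TB H X p hat : is_number TB H -> p <= TB ->
  lwins TB (S3 H H X) p hat -> lwins TB X p hat.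
Proof.
move=> /claim_num [_ [N _]] Hp H1; apply/negPn/negP => H2.
by move: (N X p hat Hp H2); rewrite H1.
Qed.

Lemma E1 TB A H X p hat :
  lwins TB (gadd (gadd A H) (gadd (neg H) X)) p hat = lwins TB (S3 H H (gadd A X)) p hat.
Proof.
rewrite /S3 gadd_assoc -(gadd_assoc H).
rewrite (lw_eqv TB (eqv_comm A (gadd (gadd H (neg H)) X))).
rewrite gadd_assoc; apply: lw_eqv; apply: eqv_add; [exact: eqv_refl | exact: eqv_comm].
Qed.

Lemma E2 TB G B X p hat :
  lwins TB (gadd (gadd G B) X) p hat = lwins TB (gadd B (gadd G X)) p hat.
Proof.
rewrite gadd_assoc (lw_eqv TB (eqv_comm G (gadd B X))) gadd_assoc.
apply: lw_eqv; apply: eqv_add; [exact: eqv_refl | exact: eqv_comm].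
Qed.

Lemma E3 TB G B X p hat :
  lwins TB (gadd (gadd G B) (gadd (neg G) X)) p hat = lwins TB (S3 G G (gadd B X)) p hat.
Proof.
rewrite /S3 gadd_assoc [gadd (gadd G (neg G)) _]gadd_assoc -(gadd_assoc B).
apply: lw_eqv; apply: eqv_add; first exact: eqv_refl.
rewrite -gadd_assoc; apply: eqv_add; [exact: eqv_comm | exact: eqv_refl].
Qed.

Lemma cancel_r TB H A B : is_number TB H -> gge TB (gadd A H) (gadd B H) -> gge TB A B.
Proof.
move=> nH hyp X p hat Hp HB; rewrite /outcome in HB *.
apply: (inv2 (H := H)) => //; rewrite -E1.
apply: hyp => //; rewrite /outcome E1; exact: inv1.
Qed.

Lemma cancel_l TB G A B : is_number TB G -> gge TB (gadd G A) (gadd G B) -> gge TB A B.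
Proof.
move=> nG hyp X p hat Hp HB; rewrite /outcome in HB *.
apply: (inv2 (H := G)) => //; rewrite -E3.
apply: hyp => //; rewrite /outcome E3; exact: inv1.
Qed.

Lemma mono_r TB H A B : gge TB A B -> gge TB (gadd A H) (gadd B H).
Proof. by move=> hyp X p hat Hp; rewrite /outcome !gadd_assoc; apply: hyp. Qed.
Lemma mono_l TB G A B : gge TB A B -> gge TB (gadd G A) (gadd G B).
Proof. by move=> hyp X p hat Hp; rewrite /outcome !E2; apply: hyp. Qed.

Unset Implicit Arguments.

Theorem mainTheorem9 (TB : nat) (G H : game) :
  is_number TB G -> is_number TB H -> is_number TB (gadd G H).
Proof.
move=> nG; elim: nG H => GL GR nGL IHGL nGR IHGR lGL lGR H nH.
have nG : is_number TB (Game GL GR) by constructor.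
elim: nH => HL HR nHL IHHL nHR IHHR lHL lHR.
have nH : is_number TB (Game HL HR) by constructor.
set S := gadd (Game GL GR) (Game HL HR).
have ES : S = Game (leftOpts S) (rightOpts S) := game_eta S.
rewrite ES; constructor => g Hg0; rewrite -?ES;
  rewrite /S ?leftOpts_add ?rightOpts_add in Hg0;
  have [Hg1|Hg1] := In_cat_inv Hg0; have [x [Hx Hg]] := In_map_inv Hg1; subst g; rewrite /S.
- exact: IHGL.
- exact: IHHL.
- exact: IHGR.
- exact: IHHR.
- split; [by apply: mono_r; have [] := lGL x Hx | by move/(cancel_r nH); have [] := lGL x Hx].
- split; [by apply: mono_l; have [] := lHL x Hx | by move/(cancel_l nG); have [] := lHL x Hx].
- split; [by apply: mono_r; have [] := lGR x Hx | by move/(cancel_r nH); have [] := lGR x Hx].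
- split; [by apply: mono_l; have [] := lHR x Hx | by move/(cancel_l nG); have [] := lHR x Hx].
Qed.
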